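(* Let $0<r<1$ and let $(T_1,\dots,T_d)$ be a doubly commuting tuple of operators in $C_{1,r}$ acting on a Hilbert space $\mathcal H$. Then there exists a decomposition of $\mathcal H$ into an orthogonal sum of $2^d$ closed subspaces $\mathcal H_1,\dots,\mathcal H_{2^d}$ such that: (1) every $\mathcal H_j$, $1\le j\le 2^d$, is a joint reducing subspace for $T_1,\dots,T_d$; (2) $T_i|_{\mathcal H_j}$ is either in $\mathcal C_{1,r}$ or a c.n.u. $C_{1,r}$-contraction for $1\le i\le d$, $1\le j\le 2^d$; (3) if $\Omega_d$ is the collection of all functions $\omega:\{1,\dots,d\}\to\{t_1,t_2\}$, then corresponding to every $\omega\in\Omega_d$ there is a unique subspace $\mathcal H_\ell$ ($1\le\ell\le 2^d$) such that for each $1\le j\le d$ the operator $T_j|_{\mathcal H_\ell}$ is of type $\omega(j)$; (4) $\mathcal H_1$ is the maximal joint reducing subspace for $T_1,\dots,T_d$ such that $T_1|_{\mathcal H_1},\dots,T_d|_{\mathcal H_1}$ are in $\mathcal C_{1,r}$; (5) $\mathcal H_{2^d}$ is the maximal joint reducing subspace for $T_1,\dots,T_d$ such that $T_1|_{\mathcal H_{2^d}},\dots,T_d|_{\mathcal H_{2^d}}$ are c.n.u. $C_{1,r}$-contractions. The decomposition is uniquely determined. One or more of the $\mathcal H_j$ may be $\{0\}$.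
   Context: $C_{1,r}=\{T: T\text{ invertible},\ \|T\|\le1,\ \|rT^{-1}\|\le1\}$. $\mathcal C_{1,r}$ is the class of operators $J$ on a Hilbert space $\mathcal L$ for which there exist orthogonal projections $P_0,P_1$ on $\mathcal L$ with $P_0+P_1=I_{\mathcal L}$ and $J^*J=P_0+r^2P_1$. An operator $T\in C_{1,r}$ on $\mathcal H$ is a c.n.u. $C_{1,r}$-contraction if $\mathcal H$ has no non-zero closed subspace that reduces $T$ to an operator in $\mathcal C_{1,r}$. An operator in $C_{1,r}$ is of type $t_1$ if it is in $\mathcal C_{1,r}$ and of type $t_2$ if it is a c.n.u. $C_{1,r}$-contraction. A tuple is doubly commuting if $T_iT_j=T_jT_i$ for all $i,j$ and $T_iT_j^*=T_j^*T_i$ for $i\ne j$. *)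

(* Defs.v *)
From mathcomp Require Import all_boot all_algebra.
From mathcomp Require Import reals complex.
Import GRing.Theory Num.Theory.
Set Implicit Arguments.
Unset Strict Implicit.
Unset Printing Implicit Defensive.
Local Open Scope ring_scope.

Section Hilbert.
Variables (R : realType) (V : lmodType R[i]) (ip : V -> V -> R[i]).

Definition hnorm (x : V) : R := Num.sqrt (complex.Re (ip x x)).

Definition hcauchy (u : nat -> V) : Prop :=
  forall e : R, 0 < e -> exists N : nat,
    forall m n : nat, (N <= m)%N -> (N <= n)%N -> hnorm (u m - u n) < e.

Definition hconverges (u : nat -> V) (l : V) : Prop :=
  forall e : R, 0 < e -> exists N : nat,
    forall n : nat, (N <= n)%N -> hnorm (u n - l) < e.

Definition is_hilbert : Prop :=
  [/\ (forall (a : R[i]) (x y z : V), ip (a *: x + y) z = a * ip x z + ip y z),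
      (forall x y : V, ip y x = ((ip x y)^*)%C),
      (forall x : V, 0 <= ip x x),
      (forall x : V, ip x x = 0 -> x = 0) &
      (forall u : nat -> V, hcauchy u -> exists l : V, hconverges u l)].

Definition closed_subspace (M : V -> Prop) : Prop :=
  [/\ M 0,
      (forall (a : R[i]) (x y : V), M x -> M y -> M (a *: x + y)) &
      (forall (u : nat -> V) (l : V), (forall n, M (u n)) -> hconverges u l -> M l)].

Definition subset_of (N M : V -> Prop) : Prop := forall x, N x -> M x.

Definition nonzero_subspace (M : V -> Prop) : Prop := exists x, M x /\ x <> 0.

Definition adjoint_of (T S : V -> V) : Prop := forall x y, ip (T x) y = ip x (S y).

Definition reduces (M : V -> Prop) (T Ts : V -> V) : Prop :=
  forall x, M x -> M (T x) /\ M (Ts x).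

(* --- properties of the restriction T|_M of T to a (reducing) closed
       subspace M, viewed as an operator on the Hilbert space M --- *)

Definition maps_into (M : V -> Prop) (T : V -> V) : Prop := forall x, M x -> M (T x).

Definition linear_on (M : V -> Prop) (P : V -> V) : Prop :=
  forall (a : R[i]) x y, M x -> M y -> P (a *: x + y) = a *: P x + P y.

Definition orth_proj_on (M : V -> Prop) (P : V -> V) : Prop :=
  [/\ maps_into M P, linear_on M P,
      (forall x, M x -> P (P x) = P x) &
      (forall x y, M x -> M y -> ip (P x) y = ip x (P y))].

Definition in_C1r_on (r : R) (M : V -> Prop) (T : V -> V) : Prop :=
  [/\ maps_into M T,
      (forall x, M x -> hnorm (T x) <= hnorm x) &
      exists S : V -> V,
        [/\ maps_into M S,
            (forall x, M x -> S (T x) = x),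
            (forall x, M x -> T (S x) = x) &
            (forall x, M x -> hnorm ((r%:C)%C *: S x) <= hnorm x)]].

(* T|_M belongs to the class \mathcal C_{1,r}: there are orthogonal projections
   P0, P1 on M with P0 + P1 = I_M and (T|_M)^* (T|_M) = P0 + r^2 P1
   (the last identity written out weakly: <T x, T y> = <(P0 + r^2 P1) x, y>) *)
Definition in_CC1r_on (r : R) (M : V -> Prop) (T : V -> V) : Prop :=
  maps_into M T /\
  exists P0 P1 : V -> V,
    [/\ orth_proj_on M P0, orth_proj_on M P1,
        (forall x, M x -> P0 x + P1 x = x) &
        (forall x y, M x -> M y ->
           ip (T x) (T y) = ip (P0 x + ((r ^+ 2)%:C)%C *: P1 x) y)].

(* T|_M is a c.n.u. C_{1,r}-contraction: it is in C_{1,r} and no nonzero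
   closed subspace of M reduces T|_M to an operator in \mathcal C_{1,r}
   (for M reducing T, (T|_M)^* = T^*|_M, so reducing T|_M inside M is the
   same as reducing T). *)
Definition cnu_on (r : R) (M : V -> Prop) (T Ts : V -> V) : Prop :=
  in_C1r_on r M T /\
  ~ (exists N : V -> Prop,
       [/\ closed_subspace N, subset_of N M, nonzero_subspace N,
           reduces N T Ts & in_CC1r_on r N T]).

(* type t1 (encoded by true) / type t2 (encoded by false) *)
Definition of_type (r : R) (t : bool) (M : V -> Prop) (T Ts : V -> V) : Prop :=
  if t then in_C1r_on r M T /\ in_CC1r_on r M T else cnu_on r M T Ts.

Definition orth_decomposition (I : finType) (Hs : I -> V -> Prop) : Prop :=
  [/\ (forall j, closed_subspace (Hs j)),
      (forall j k x y, j != k -> Hs j x -> Hs k y -> ip x y = 0) &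
      (forall x, exists f : I -> V, (forall j, Hs j (f j)) /\ x = \sum_(j : I) f j)].

End Hilbert.

(* the indices 1 and 2^d of {1,..,2^d}, as elements of 'I_(2^d) *)
Lemma exp2_gt0 (d : nat) : (0 < 2 ^ d)%N.
Proof. by rewrite expn_gt0. Qed.

Lemma exp2_pred_lt (d : nat) : ((2 ^ d).-1 < 2 ^ d)%N.
Proof. by rewrite prednK ?exp2_gt0. Qed.

Definition first_idx (d : nat) : 'I_(2 ^ d) := Ordinal (exp2_gt0 d).
Definition last_idx (d : nat) : 'I_(2 ^ d) := Ordinal (exp2_pred_lt d).

(* Main.v *)
Require Import Defs.
From mathcomp Require Import all_boot all_order all_algebra.
From mathcomp Require Import reals complex.
From mathcomp Require Import ring lra.
From mathcomp Require Import fingroup perm.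
From mathcomp Require boolp.
Import Order.TTheory GRing.Theory Num.Theory.
Set Implicit Arguments.
Unset Strict Implicit.
Unset Printing Implicit Defensive.
Local Open Scope ring_scope.

Ltac cx := simpc; rewrite /=; simpc; apply/eqP; rewrite eq_complex /=; apply/andP; split; apply/eqP; ring.

Section Cplx.
Variable R : realType.
Lemma c_eq0 (z : R[i]) : complex.Re z = 0 -> complex.Im z = 0 -> z = 0.
Proof. by case: z => a b /= -> ->. Qed.
Lemma ReD (z w : R[i]) : complex.Re (z + w) = complex.Re z + complex.Re w.
Proof. by case: z => a b; case: w => c d. Qed.
Lemma ReN (z : R[i]) : complex.Re (- z) = - complex.Re z.
Proof. by case: z => a b. Qed.
Lemma ReJ (z : R[i]) : complex.Re (conjc z) = complex.Re z.
Proof. by case: z. Qed.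
Lemma ReRM (t : R) (z : R[i]) : complex.Re (t%:C * z)%C = t * complex.Re z.
Proof. case: z => a b; simpc => /=; ring. Qed.
Lemma ReMI (z : R[i]) : complex.Re ((- 'i) * z)%C = complex.Im z.
Proof. case: z => a b; simpc => /=; ring. Qed.
Lemma ReJI (z : R[i]) : complex.Re (conjc 'i * z)%C = complex.Im z.
Proof. case: z => a b; simpc => /=; ring. Qed.
Lemma IJI : ((- 'i) * conjc (- 'i) = 1 :> R[i])%C.
Proof. simpc. reflexivity. Qed.
Lemma JR (t : R) : (conjc (t%:C) = t%:C :> R[i])%C.
Proof. by rewrite /= oppr0. Qed.
Lemma RCM (a b : R) : ((a * b)%:C = a%:C * b%:C :> R[i])%C.
Proof. by rewrite rmorphM. Qed.
Lemma RCD (a b : R) : ((a + b)%:C = a%:C + b%:C :> R[i])%C.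
Proof. by rewrite rmorphD. Qed.
Lemma RC1 : ((1 : R)%:C = 1 :> R[i])%C.
Proof. by []. Qed.
Lemma RC0 : ((0 : R)%:C = 0 :> R[i])%C.
Proof. by []. Qed.
Lemma ReR (t : R) : complex.Re (t%:C)%C = t.
Proof. by []. Qed.
Lemma ge0_real (z : R[i]) : 0 <= z -> z = ((complex.Re z)%:C)%C.
Proof. by case: z => a b; rewrite lecE /= => /andP[/eqP -> _]. Qed.
Lemma ge0_Re (z : R[i]) : 0 <= z -> 0 <= complex.Re z.
Proof. by case: z => a b; rewrite lecE /= => /andP[_ ->]. Qed.

Lemma conjD (z w : R[i]) : conjc (z + w) = conjc z + conjc w.
Proof. case: z => a b; case: w => c d; cx. Qed.
Lemma conjM (z w : R[i]) : conjc (z * w) = conjc z * conjc w.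
Proof. case: z => a b; case: w => c d; cx. Qed.
Lemma conjN (z : R[i]) : conjc (- z) = - conjc z.
Proof. case: z => a b; cx. Qed.
Lemma conj0 : conjc (0 : R[i]) = 0.
Proof. cx. Qed.

Lemma small_le0 (r K : R) : 0 <= K ->
  (forall e, 0 < e -> e <= 1 -> r <= e * K) -> r <= 0.
Proof.
move=> K0 H; rewrite leNgt; apply/negP => r0.
have d0 : 0 < r + K + 1 by lra.
have := H (r / (r + K + 1)).
rewrite divr_gt0 // ?ler_pdivrMr // mul1r.
have -> : r / (r + K + 1) * K = (r * K) / (r + K + 1) by rewrite mulrAC.
rewrite ler_pdivlMr //; move=> /(_ isT); nra.
Qed.
End Cplx.

Section IP.
Variables (R : realType) (V : lmodType R[i]) (ip : V -> V -> R[i]).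
Hypothesis Hh : is_hilbert ip.

Definition Nm (x : V) : R := complex.Re (ip x x).

Lemma ipDZl a x y z : ip (a *: x + y) z = a * ip x z + ip y z.
Proof. by case: Hh. Qed.
Lemma ipC x y : ip y x = ((ip x y)^*)%C.
Proof. by case: Hh. Qed.
Lemma ip_ge0 x : 0 <= ip x x.
Proof. by case: Hh. Qed.
Lemma ip_eq0 x : ip x x = 0 -> x = 0.
Proof. by case: Hh => _ _ _ /(_ x). Qed.

Lemma ipDl x y z : ip (x + y) z = ip x z + ip y z.
Proof. by rewrite -[x]scale1r ipDZl mul1r scale1r. Qed.
Lemma ip0l z : ip 0 z = 0.
Proof.
have h := ipDl 0 0 z; rewrite addr0 in h.
by apply: (addrI (ip 0 z)); rewrite addr0 -h.
Qed.
Lemma ipZl a x z : ip (a *: x) z = a * ip x z.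
Proof. by rewrite -[a *: x]addr0 ipDZl ip0l addr0. Qed.
Lemma ipNl x z : ip (- x) z = - ip x z.
Proof. by rewrite -scaleN1r ipZl mulN1r. Qed.
Lemma ipBl x y z : ip (x - y) z = ip x z - ip y z.
Proof. by rewrite ipDl ipNl. Qed.
Lemma ipDr x y z : ip z (x + y) = ip z x + ip z y.
Proof. by rewrite ipC ipDl conjD -!ipC. Qed.
Lemma ipZr a x z : ip z (a *: x) = conjc a * ip z x.
Proof. by rewrite ipC ipZl conjM -ipC. Qed.
Lemma ip0r z : ip z 0 = 0.
Proof. by rewrite ipC ip0l conj0. Qed.
Lemma ipNr x z : ip z (- x) = - ip z x.
Proof. by rewrite ipC ipNl conjN -ipC. Qed.
Lemma ipBr x y z : ip z (x - y) = ip z x - ip z y.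
Proof. by rewrite ipDr ipNr. Qed.

Lemma ip_sym0 x y : ip x y = 0 -> ip y x = 0.
Proof. by move=> h; rewrite ipC h; cx. Qed.

Lemma ipxx x : ip x x = ((Nm x)%:C)%C.
Proof. exact: ge0_real (ip_ge0 x). Qed.
Lemma Nm_ge0 x : 0 <= Nm x.
Proof. exact: ge0_Re (ip_ge0 x). Qed.
Lemma Nm_eq0 x : Nm x = 0 -> x = 0.
Proof. by move=> h; apply: ip_eq0; rewrite ipxx h. Qed.
Lemma ReipC x y : complex.Re (ip y x) = complex.Re (ip x y).
Proof. by rewrite ipC ReJ. Qed.

Lemma NmD x y : Nm (x + y) = Nm x + Nm y + 2 * complex.Re (ip x y).
Proof.
rewrite /Nm ipDl !ipDr !ReD (ReipC x y); ring.
Qed.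
Lemma NmN x : Nm (- x) = Nm x.
Proof. by rewrite /Nm ipNl ipNr opprK. Qed.
Lemma ReipNr x y : complex.Re (ip x (- y)) = - complex.Re (ip x y).
Proof. by rewrite ipNr ReN. Qed.
Lemma NmB x y : Nm (x - y) = Nm x + Nm y - 2 * complex.Re (ip x y).
Proof. by rewrite NmD NmN ReipNr; ring. Qed.
Lemma ReipZl (t : R) x y : complex.Re (ip ((t%:C)%C *: x) y) = t * complex.Re (ip x y).
Proof. by rewrite ipZl ReRM. Qed.
Lemma NmZ (t : R) x : Nm ((t%:C)%C *: x) = t ^+ 2 * Nm x.
Proof. by rewrite /Nm ipZl ipZr JR mulrA -RCM ReRM expr2. Qed.
Lemma NmI x : Nm ((- 'i)%C *: x) = Nm x.
Proof. by rewrite /Nm ipZl ipZr mulrA IJI mul1r. Qed.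
Lemma ReipIl x y : complex.Re (ip ((- 'i)%C *: x) y) = complex.Im (ip x y).
Proof. by rewrite ipZl ReMI. Qed.
Lemma ReipIr x y : complex.Re (ip x ('i%C *: y)) = complex.Im (ip x y).
Proof. by rewrite ipZr ReJI. Qed.

Lemma quad t x y : 0 < t -> 2 * complex.Re (ip x y) <= t * Nm x + Nm y / t.
Proof.
move=> t0; have := Nm_ge0 ((t%:C)%C *: x - y).
rewrite NmB NmZ ReipZl => h.
rewrite -(ler_pM2l t0) mulrDr [t * (_ / t)]mulrC divfK ?gt_eqF //; nra.
Qed.

Lemma ip_nondeg u : (forall z, ip u z = 0) -> u = 0.
Proof. by move=> h; apply: ip_eq0; rewrite h. Qed.
Lemma ip_nondeg_r u : (forall z, ip z u = 0) -> u = 0.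
Proof. by move=> h; apply: ip_eq0; rewrite h. Qed.
Lemma ip_ext_r u v : (forall z, ip z u = ip z v) -> u = v.
Proof. by move=> h; apply/eqP; rewrite -subr_eq0; apply/eqP/ip_nondeg_r => z; rewrite ipBr h subrr. Qed.

Lemma hnorm_lt x e : 0 < e -> hnorm ip x < e -> Nm x < e ^+ 2.
Proof.
move=> e0; rewrite /hnorm -/(Nm x) => h.
by rewrite -(sqr_sqrtr (Nm_ge0 x)) ltr_pXn2r // nnegrE ?sqrtr_ge0 ?ltW.
Qed.
Lemma lt_hnorm x e : 0 < e -> Nm x < e ^+ 2 -> hnorm ip x < e.
Proof.
move=> e0 h; rewrite /hnorm -/(Nm x) -(ger0_norm (ltW e0)) -sqrtr_sqr.
by rewrite ltr_sqrt // exprn_gt0.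
Qed.

End IP.

Lemma archi_inv (R : realType) (e : R) : 0 < e ->
  exists N : nat, forall n, (N <= n)%N -> (n.+1%:R)^-1 < e.
Proof.
move=> e0; exists (Num.trunc e^-1) => n hn.
rewrite -[e]invrK ltf_pV2 ?posrE ?invr_gt0 ?ltr0Sn //.
apply: (lt_le_trans (truncnS_gt _)); by rewrite ler_nat ltnS.
Qed.

Section Proj.
Variables (R : realType) (V : lmodType R[i]) (ip : V -> V -> R[i]).
Hypothesis Hh : is_hilbert ip.
Local Notation Nm := (Nm ip).

Definition subsp (M : V -> Prop) := M 0 /\ forall a x y, M x -> M y -> M (a *: x + y).
Lemma closed_subsp M : closed_subspace ip M -> subsp M.
Proof. by case. Qed.
Lemma subspD M x y : subsp M -> M x -> M y -> M (x + y).
Proof. by case=> _ h mx my; rewrite -[x]scale1r; apply: h. Qed.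
Lemma subspZ M a x : subsp M -> M x -> M (a *: x).
Proof. by case=> h0 h mx; rewrite -[_ *: _]addr0; apply: h. Qed.
Lemma subspN M x : subsp M -> M x -> M (- x).
Proof. by move=> sM mx; rewrite -scaleN1r; apply: subspZ. Qed.
Lemma subspB M x y : subsp M -> M x -> M y -> M (x - y).
Proof. by move=> sM mx my; apply: subspD => //; apply: subspN. Qed.

Definition orth (Z : V -> Prop) : V -> Prop := fun x => forall z, Z z -> ip x z = 0.

Lemma Re_lim l z : (forall e, 0 < e -> exists v, Nm (l - v) < e ^+ 2 /\ complex.Re (ip v z) = 0) ->
  complex.Re (ip l z) <= 0.
Proof.
move=> h; apply: (@small_le0 _ _ (1 + Nm z)); first by have := Nm_ge0 Hh z; lra.
move=> e e0 e1; have [v [hv hz]] := h e e0.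
have -> : complex.Re (ip l z) = complex.Re (ip (l - v) z).
  by rewrite ipBl // ReD ReN hz subr0.
have ei : 0 < e^-1 by rewrite invr_gt0.
have := quad Hh (l - v) z ei; rewrite invrK.
have : e^-1 * Nm (l - v) <= e.
  rewrite ler_pdivrMl //; move: hv; rewrite expr2 => /ltW; done.
have := Nm_ge0 Hh z; nra.
Qed.

Lemma ip_lim l z : (forall e, 0 < e -> exists v, Nm (l - v) < e ^+ 2 /\ ip v z = 0) -> ip l z = 0.
Proof.
move=> h; apply: c_eq0.
  apply/eqP; rewrite eq_le; apply/andP; split.
    apply: Re_lim => e /h [v [hv hz]]; exists v; split => //; by rewrite hz.
  rewrite -oppr_le0 -(ReipNr Hh); apply: Re_lim => e /h [v [hv hz]]; exists v; split => //.
  by rewrite ipNr // hz oppr0.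
apply/eqP; rewrite eq_le; apply/andP; split.
  rewrite -(ReipIr Hh); apply: Re_lim => e /h [v [hv hz]]; exists v; split => //.
  by rewrite ipZr // hz mulr0.
rewrite -oppr_le0 -(ReipIr Hh) -(ReipNr Hh); apply: Re_lim => e /h [v [hv hz]]; exists v; split => //.
by rewrite ipNr // ipZr // hz mulr0 oppr0.
Qed.

Lemma orth_closed Z : closed_subspace ip (orth Z).
Proof.
split.
- by move=> z _; rewrite ip0l.
- by move=> a x y hx hy z Zz; rewrite ipDZl // hx // hy // mulr0 addr0.
- move=> u l hu hl z Zz; apply: ip_lim => e e0.
  have [N HN] := hl e e0; exists (u N); split; last exact: hu.
  by rewrite -NmN // opprB; apply: hnorm_lt => //; apply: HN.
Qed.

Lemma Re_le0_orth M q : subsp M -> (forall m, M m -> complex.Re (ip q m) <= 0) -> orth M q.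
Proof.
move=> sM h m Mm; apply: c_eq0.
  apply/eqP; rewrite eq_le h //= -oppr_le0 -(ReipNr Hh) h //; exact: subspN.
apply/eqP; rewrite eq_le -(ReipIr Hh) h /=; last exact: subspZ.
rewrite -oppr_le0 -(ReipNr Hh) h //; apply: subspN => //; exact: subspZ.
Qed.

Lemma proj_ex M : closed_subspace ip M -> forall x, exists p, M p /\ orth M (x - p).
Proof.
move=> HM x; have sM := closed_subsp HM.
pose S := fun y : R => exists m, M m /\ y = Nm (x - m).
have S0 : classical_sets.nonempty S by exists (Nm (x - 0)), 0; split => //; case: sM.
have lbS0 : classical_sets.lbound S 0 by move=> y [m [_ ->]]; exact: Nm_ge0.
have lbS : classical_sets.has_lbound S by exists 0.
set del := inf S.
have del0 : 0 <= del by apply: lb_le_inf.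
have del_le : forall m, M m -> del <= Nm (x - m).
  by move=> m Mm; apply: ge_inf => //; exists m.
have approx : forall n : nat, exists m, M m /\ Nm (x - m) < del + (n.+1%:R)^-1.
  move=> n; have : inf S < del + (n.+1%:R)^-1 by rewrite ltrDl invr_gt0 ltr0Sn.
  by case/(inf_lt S0) => y [m [Mm ->]] hy; exists m.
case: (boolp.choice approx) => mm Hmm.
have par : forall n k, Nm (mm k - mm n) <= 2 * (n.+1%:R)^-1 + 2 * (k.+1%:R)^-1.
  move=> n k.
  have pl := NmD Hh (x - mm n) (x - mm k); have mi := NmB Hh (x - mm n) (x - mm k).
  have e1 : x - mm n - (x - mm k) = mm k - mm n.
    by rewrite opprB addrC addrA subrK.
  rewrite e1 in mi.
  have e2 : x - mm n + (x - mm k) = (2%:C)%C *: (x - ((2^-1)%:C)%C *: (mm n + mm k)).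
    rewrite scalerBr scalerA -RCM mulfV ?pnatr_eq0 // RC1 scale1r.
    rewrite (_ : (2%:C)%C = 1 + 1); last by rewrite (_ : 2 = 1 + 1 :> R) // RCD.
    by rewrite scalerDl scale1r addrACA -opprD.
  rewrite e2 (NmZ Hh) in pl.
  have hm : M (((2^-1)%:C)%C *: (mm n + mm k)).
    by apply: subspZ => //; apply: subspD => //; [exact: (Hmm n).1 | exact: (Hmm k).1].
  have := del_le _ hm; have := (Hmm n).2; have := (Hmm k).2.
  have := Nm_ge0 Hh (x - mm n). rewrite (_ : (2:R) ^+ 2 = 4) in pl; last by rewrite expr2; lra.
  move: (n.+1%:R)^-1 (k.+1%:R)^-1 => a b; move: (Nm _) (Nm _) (Nm _) (Nm _) mi pl => A B C D; clearbody del; lra.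
have cauchy : hcauchy ip mm.
  move=> e e0; have e40 : 0 < e ^+ 2 / 4 by rewrite divr_gt0 // exprn_gt0.
  have [N HN] := archi_inv e40; exists N => m n hm hn.
  apply: lt_hnorm => //; apply: (le_lt_trans (par n m)).
  have h4 : e ^+ 2 / 4 * 4 = e ^+ 2 by rewrite divfK // pnatr_eq0.
  have := HN m hm; have := HN n hn; move: h4.
  move: (e ^+ 2 / 4) (e ^+ 2) (n.+1%:R)^-1 (m.+1%:R)^-1 => E4 E a b; lra.
have [p Hp] : exists p, hconverges ip mm p by case: Hh => _ _ _ _; apply.
have Mp : M p by case: HM => _ _; apply; [move=> n; exact: (Hmm n).1 | exact: Hp].
have Hle : Nm (x - p) <= del.
  rewrite -subr_le0; apply: (@small_le0 _ _ (del + 4)); first lra.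
  move=> e e0 e1.
  have [N1 HN1] := Hp e e0; have [N2 HN2] := archi_inv e0.
  pose n := maxn N1 N2.
  have hb : Nm (mm n - p) < e ^+ 2 by apply: hnorm_lt => //; apply: HN1; rewrite leq_maxl.
  have ha : Nm (x - mm n) < del + e.
    by apply: (lt_trans (Hmm n).2); rewrite ltrD2l; apply: HN2; rewrite leq_maxr.
  have -> : x - p = (x - mm n) + (mm n - p) by rewrite addrA subrK.
  rewrite NmD //; have := quad Hh (x - mm n) (mm n - p) e0.
  have : Nm (mm n - p) / e < e by rewrite ltr_pdivrMr // -expr2.
  have := Nm_ge0 Hh (x - mm n); have := Nm_ge0 Hh (mm n - p).
  move: ha hb; rewrite expr2; nra.
exists p; split => //; apply: Re_le0_orth => // m Mm.
apply: (@small_le0 _ _ (Nm m)); first exact: Nm_ge0.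
move=> e e0 e1.
have Mpm : M (p + (e%:C)%C *: m) by apply: subspD => //; exact: subspZ.
have := del_le _ Mpm.
rewrite opprD addrA NmB // NmZ // ReipC // ReipZl // ReipC //.
have := Nm_ge0 Hh m; nra.
Qed.

End Proj.

Section ProjProps.
Variables (R : realType) (V : lmodType R[i]) (ip : V -> V -> R[i]).
Hypothesis Hh : is_hilbert ip.
Local Notation Nm := (Nm ip).
Local Notation orth := (orth ip).

Lemma ip_ext_l u v : (forall y, ip u y = ip v y) -> u = v.
Proof. by move=> h; apply/eqP; rewrite -subr_eq0; apply/eqP/(ip_nondeg Hh) => z; rewrite ipBl // h subrr. Qed.

Lemma closed_ext (M M' : V -> Prop) : (forall x, M x <-> M' x) -> closed_subspace ip M -> closed_subspace ip M'.
Proof.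
move=> e [h0 h1 h2]; split.
- by apply/e.
- by move=> a x y /e hx /e hy; apply/e; apply: h1.
- by move=> u l hu hl; apply/e; apply: (h2 u) => // n; apply/e.
Qed.

Lemma closed_all (I : Type) (K : I -> V -> Prop) : (forall i, closed_subspace ip (K i)) ->
  closed_subspace ip (fun x => forall i, K i x).
Proof.
move=> hK; split.
- by move=> i; case: (hK i).
- by move=> a x y hx hy i; case: (hK i) => _ h _; apply: h.
- by move=> u l hu hl i; case: (hK i) => _ _ h; apply: (h u) => // n; apply: hu.
Qed.

Lemma closed_and (M N : V -> Prop) : closed_subspace ip M -> closed_subspace ip N ->
  closed_subspace ip (fun x => M x /\ N x).
Proof.
move=> hM hN; pose K (b : bool) := if b then M else N.
apply: (closed_ext (M := fun x => forall b, K b x)); last by apply: closed_all; case.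
by move=> x; split; [move=> h; split; [exact: (h true) | exact: (h false)] | case=> ? ? []].
Qed.

Lemma orth_self M z : M z -> orth M z -> z = 0.
Proof. by move=> Mz oz; apply: (ip_eq0 Hh); apply: oz. Qed.

Definition is_proj (M : V -> Prop) (P : V -> V) := (forall x, M (P x)) /\ (forall x, orth M (x - P x)).

Lemma proj_exists M : closed_subspace ip M -> exists P, is_proj M P.
Proof.
move=> HM; case: (boolp.choice (proj_ex Hh HM)) => P HP.
by exists P; split => x; case: (HP x).
Qed.

Variables (M : V -> Prop) (P : V -> V).
Hypotheses (HM : closed_subspace ip M) (HP : is_proj M P).
Let sM := closed_subsp HM.

Lemma proj_in x : M (P x). Proof. by case: HP. Qed.
Lemma proj_orth x : orth M (x - P x). Proof. by case: HP. Qed.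

Lemma proj_uniq x p : M p -> orth M (x - p) -> P x = p.
Proof.
move=> Mp op; apply/eqP; rewrite -subr_eq0; apply/eqP; apply: (orth_self (M := M)).
  by apply: subspB => //; apply: proj_in.
move=> m Mm; have -> : P x - p = (x - p) - (x - P x) by rewrite opprB [RHS]addrC addrA subrK.
by rewrite ipBl // op // proj_orth // subrr.
Qed.

Lemma proj_id x : M x -> P x = x.
Proof. by move=> Mx; apply: proj_uniq => // m _; rewrite subrr ip0l. Qed.

Lemma proj0 : P 0 = 0.
Proof. by apply: proj_id; case: sM. Qed.

Lemma projP a x y : P (a *: x + y) = a *: P x + P y.
Proof.
apply: proj_uniq; first by case: sM => _; apply; apply: proj_in.
move=> m Mm; have -> : a *: x + y - (a *: P x + P y) = a *: (x - P x) + (y - P y).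
  by rewrite scalerBr opprD addrACA.
by rewrite ipDZl // !proj_orth // mulr0 addr0.
Qed.

Lemma proj_lin : forall a x y, P (a *: x + y) = a *: P x + P y.
Proof. exact: projP. Qed.

Lemma projB x y : P (x - y) = P x - P y.
Proof. by rewrite (_ : x - y = (-1) *: y + x) ?projP ?scaleN1r 1?addrC // scaleN1r addrC. Qed.

Lemma proj_sa x y : ip (P x) y = ip x (P y).
Proof.
have h1 : ip (P x) y = ip (P x) (P y).
  rewrite {1}(_ : y = (y - P y) + P y); last by rewrite subrK.
  by rewrite ipDr // (ip_sym0 Hh (proj_orth y (proj_in x))) add0r.
have h2 : ip x (P y) = ip (P x) (P y).
  rewrite {1}(_ : x = (x - P x) + P x); last by rewrite subrK.
  by rewrite ipDl // (proj_orth x (proj_in y)) add0r.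
by rewrite h1 h2.
Qed.

Lemma proj_of_orth x : orth M x -> P x = 0.
Proof. by move=> ox; apply: proj_uniq; [case: sM | rewrite subr0]. Qed.

Lemma proj_comm (F G : V -> V) : adjoint_of ip F G -> (forall x y, F (x - y) = F x - F y) ->
  (forall x, M x -> M (F x)) -> (forall x, M x -> M (G x)) -> forall x, P (F x) = F (P x).
Proof.
move=> adj addF MF MG x; apply: proj_uniq; first by apply: MF; apply: proj_in.
by move=> m Mm; rewrite -addF adj (proj_orth x (MG _ Mm)).
Qed.

End ProjProps.

Section Lin.
Variables (R : realType) (V : lmodType R[i]).
Definition linf (Q : V -> V) := forall a x y, Q (a *: x + y) = a *: Q x + Q y.
Variables (Q : V -> V) (HQ : linf Q).
Lemma linf0 : Q 0 = 0.
Proof. by have := HQ (-1) 0 0; rewrite scaler0 addr0 scaleN1r addNr. Qed.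
Lemma linfD x y : Q (x + y) = Q x + Q y.
Proof. by rewrite -[x]scale1r HQ !scale1r. Qed.
Lemma linfZ a x : Q (a *: x) = a *: Q x.
Proof. by rewrite -[a *: x]addr0 HQ linf0 addr0. Qed.
Lemma linfN x : Q (- x) = - Q x.
Proof. by rewrite -scaleN1r linfZ scaleN1r. Qed.
Lemma linfB x y : Q (x - y) = Q x - Q y.
Proof. by rewrite linfD linfN. Qed.
End Lin.

Lemma linf_lin (R : realType) (V : lmodType R[i]) (T : {linear V -> V}) : linf T.
Proof. by move=> a x y; rewrite linearP. Qed.

Ltac vexp Hh := rewrite ?(ipDl Hh, ipBl Hh, ipZl Hh, ipNl Hh, ip0l Hh).

Section Op.
Variables (R : realType) (V : lmodType R[i]) (ip : V -> V -> R[i]).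
Hypothesis Hh : is_hilbert ip.
Variables (r : R) (T : {linear V -> V}) (Ts : V -> V).
Hypothesis Hr : 0 < r < 1.
Hypothesis Hadj : adjoint_of ip T Ts.
Local Notation orth := (orth ip).

Lemma adjTs x y : ip (Ts x) y = ip x (T y).
Proof. by rewrite ipC // -Hadj -ipC. Qed.

Lemma TsP : linf Ts.
Proof.
move=> a x y; apply: (ip_ext_r Hh) => z.
by rewrite -Hadj !ipDr // !ipZr // -!Hadj.
Qed.

Definition Lb (b : bool) : V -> V := if b then (T : V -> V) else Ts.
Fixpoint wd (s : seq bool) (x : V) : V := if s is b :: s' then wd s' (Lb b x) else x.
Fixpoint wds (s : seq bool) (y : V) : V := if s is b :: s' then Lb (~~ b) (wds s' y) else y.
Definition B (x : V) : V := Ts (T x).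
Definition c2 : R[i] := ((r ^+ 2)%:C)%C.
Definition c3 : R[i] := (1 - c2)^-1.
Definition A (x : V) : V := B (B x) - (1 + c2) *: B x + c2 *: x.
Definition H1 (x : V) : Prop := forall s, A (wd s x) = 0.

Lemma c2n1 : 1 - c2 != 0.
Proof.
apply/eqP => h; have : complex.Re (1 - c2) = 0 by rewrite h.
rewrite ReD ReN /= => h2; clear h; move: Hr => /andP[r0 r1]; nra.
Qed.
Lemma c2n1' : 1 - ((r%:C)%C) ^+ 2 != 0.
Proof. by rewrite -rmorphXn; exact: c2n1. Qed.
Lemma Jc2 : conjc c2 = c2.
Proof. exact: JR. Qed.
Lemma Jc21 : conjc (1 + c2) = 1 + c2.
Proof. by rewrite conjD Jc2; congr (_ + _); cx. Qed.
Lemma Jc3 : conjc c3 = c3.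
Proof.
rewrite /c3 /c2 (_ : 1 - _ = ((1 - r ^+ 2)%:C)%C); last by rewrite rmorphB.
by rewrite -fmorphV JR.
Qed.

Lemma LbP b : linf (Lb b).
Proof. by case: b; [exact: linf_lin | exact: TsP]. Qed.
Lemma Lb_adj b x y : ip (Lb b x) y = ip x (Lb (~~ b) y).
Proof. by case: b; [exact: Hadj | exact: adjTs]. Qed.
Lemma wdP s : linf (wd s).
Proof. by elim: s => [|b s IH] a x y //=; rewrite LbP IH. Qed.
Lemma wd_adj s x y : ip (wd s x) y = ip x (wds s y).
Proof. by elim: s x => [|b s IH] x //=; rewrite IH Lb_adj. Qed.
Lemma BP : linf B.
Proof. by move=> a x y; rewrite /B linearP TsP. Qed.
Lemma B_adj x y : ip (B x) y = ip x (B y).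
Proof. by rewrite /B adjTs Hadj. Qed.
Lemma AP : linf A.
Proof.
move=> a x y; rewrite /A !BP; apply: (ip_ext_l Hh) => z; vexp Hh; ring.
Qed.
Lemma A_adj x y : ip (A x) y = ip x (A y).
Proof.
by rewrite /A; vexp Hh; rewrite ?(ipDr Hh, ipNr Hh, ipZr Hh) Jc2 Jc21 !B_adj.
Qed.

Lemma red_wd M : reduces M T Ts -> forall s x, M x -> M (wd s x).
Proof. by move=> red; elim=> [|[] s IH] x Mx //=; apply: IH; case: (red x Mx). Qed.

Lemma H1_closed : closed_subspace ip H1.
Proof.
pose Z := fun z => exists s y, z = wds s (A y).
apply: (closed_ext (M := orth Z)); last exact: orth_closed.
move=> x; split.
  move=> ox s; apply: (ip_nondeg Hh) => y.
  by rewrite A_adj wd_adj; apply: ox; exists s, y.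
by move=> hx z [s [y ->]]; rewrite -wd_adj -A_adj hx ip0l.
Qed.

Lemma H1_red : reduces H1 T Ts.
Proof. by move=> x hx; split => s; [exact: (hx (true :: s)) | exact: (hx (false :: s))]. Qed.

Lemma CC_A M : subsp M -> reduces M T Ts -> in_CC1r_on ip r M T -> forall x, M x -> A x = 0.
Proof.
move=> sM red [_ [P0 [P1 [[P0in P0lin P0id P0sa] [P1in P1lin P1id P1sa] Psum Pform]]]].
have HB : forall x, M x -> B x = P0 x + c2 *: P1 x.
  move=> x Mx; apply/eqP; rewrite -subr_eq0; apply/eqP.
  apply: (orth_self Hh (M := M)).
    apply: subspB => //; first by rewrite /B; case: (red _ Mx) => h _; case: (red _ h).
    by apply: subspD => //; [exact: P0in | apply: subspZ => //; exact: P1in].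
  by move=> y My; rewrite ipBl // /B adjTs Pform // subrr.
have P01 : forall x, M x -> P0 (P1 x) = 0.
  move=> x Mx; have h := Psum _ (P1in _ Mx); rewrite P1id // in h.
  by rewrite -(addrK (P1 x) (P0 (P1 x))) h subrr.
have P10 : forall x, M x -> P1 (P0 x) = 0.
  move=> x Mx; have h := Psum _ (P0in _ Mx); rewrite P0id // addrC in h.
  by rewrite -(addrK (P0 x) (P1 (P0 x))) h subrr.
move=> x Mx.
have e : A x = B (P0 x) + c2 *: B (P1 x) - (1 + c2) *: (P0 x + c2 *: P1 x) + c2 *: (P0 x + P1 x).
  by rewrite /A (HB x Mx) (linfD BP) (linfZ BP) Psum.
rewrite e (HB _ (P0in _ Mx)) (HB _ (P1in _ Mx)) P01 // P10 // P0id // P1id //.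
apply: (ip_ext_l Hh) => z; vexp Hh; ring.
Qed.

Lemma BBA x : A x = 0 -> B (B x) = (1 + c2) *: B x - c2 *: x.
Proof.
move=> h; apply/eqP; rewrite -subr_eq0; apply/eqP; rewrite -h /A.
apply: (ip_ext_l Hh) => z; vexp Hh; ring.
Qed.

Lemma A_CC M : subsp M -> reduces M T Ts -> (forall x, M x -> A x = 0) -> in_CC1r_on ip r M T.
Proof.
move=> sM red hA.
have MB : forall x, M x -> M (B x) by move=> x Mx; rewrite /B; case: (red _ Mx) => h _; case: (red _ h).
have c2n := c2n1.
split; first by move=> x Mx; case: (red _ Mx).
exists (fun x => c3 *: (B x - c2 *: x)), (fun x => c3 *: (x - B x)); split.
- split.
  + by move=> x Mx; apply: subspZ => //; apply: subspB => //; [exact: MB | exact: subspZ].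
  + move=> a x y _ _; rewrite BP; apply: (ip_ext_l Hh) => z; vexp Hh; ring.
  + move=> x Mx; rewrite (linfZ BP) (linfB BP) (linfZ BP) BBA ?hA //.
    apply: (ip_ext_l Hh) => z; vexp Hh; rewrite /c3; field; exact: c2n1'.
  + move=> x y _ _; vexp Hh; rewrite ?(ipDr Hh, ipNr Hh, ipZr Hh) Jc3 Jc2 B_adj; ring.
- split.
  + by move=> x Mx; apply: subspZ => //; apply: subspB => //; exact: MB.
  + move=> a x y _ _; rewrite BP; apply: (ip_ext_l Hh) => z; vexp Hh; ring.
  + move=> x Mx; rewrite (linfZ BP) (linfB BP) BBA ?hA //.
    apply: (ip_ext_l Hh) => z; vexp Hh; rewrite /c3; field; exact: c2n1'.
  + move=> x y _ _; vexp Hh; rewrite ?(ipDr Hh, ipNr Hh, ipZr Hh) Jc3 B_adj; ring.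
- move=> x _; apply: (ip_ext_l Hh) => z; vexp Hh; rewrite /c3; field; exact: c2n1'.
- move=> x y _ _; rewrite Hadj -/(B y) -B_adj.
  congr (ip _ y); apply: (ip_ext_l Hh) => z; vexp Hh; rewrite /c3; field; exact: c2n1'.
Qed.

Lemma H1_CC : in_CC1r_on ip r H1 T.
Proof. by apply: A_CC; [exact: closed_subsp H1_closed | exact: H1_red | move=> x h; exact: (h [::])]. Qed.

Lemma H1_max N : subsp N -> reduces N T Ts -> in_CC1r_on ip r N T -> forall x, N x -> H1 x.
Proof. by move=> sN red hc x Nx s; apply: (CC_A sN red hc); apply: red_wd. Qed.

Lemma comm_H1 (Q : V -> V) : linf Q -> (forall x, Q (T x) = T (Q x)) -> (forall x, Q (Ts x) = Ts (Q x)) ->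
  forall x, H1 x -> H1 (Q x).
Proof.
move=> lQ cT cTs.
have cL : forall b x, Q (Lb b x) = Lb b (Q x) by case.
have cw : forall s x, Q (wd s x) = wd s (Q x) by elim=> [|b s IH] x //=; rewrite IH cL.
have cB : forall x, Q (B x) = B (Q x) by move=> x; rewrite /B cTs cT.
have cA : forall x, Q (A x) = A (Q x).
  by move=> x; rewrite /A (linfD lQ) (linfB lQ) !(linfZ lQ) !cB.
by move=> x hx s; rewrite -cw -cA hx (linf0 lQ).
Qed.

Hypothesis HT : in_C1r_on ip r (fun _ => True) T.

Lemma C1r_M M : closed_subspace ip M -> reduces M T Ts -> in_C1r_on ip r M T.
Proof.
move=> HM red; case: HT => _ nT [S [_ ST TS nS]].
split.
- by move=> x Mx; case: (red _ Mx).
- by move=> x _; apply: nT.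
exists S; split; last by move=> x _; apply: nS.
- move=> x Mx; have [P HP] := proj_exists Hh HM.
  set y := S x; set q := y - P y.
  have Tq : T q = x - T (P y) by rewrite linearB /y (TS x I).
  have MTq : M (T q).
    rewrite Tq; apply: subspB => //; first exact: closed_subsp HM.
    by case: (red _ (proj_in HP y)).
  have oTq : orth M (T q).
    by move=> m Mm; rewrite Hadj; apply: (proj_orth HP); case: (red _ Mm).
  have Tq0 := orth_self Hh MTq oTq.
  have q0 : q = 0 by rewrite -(ST q I) Tq0 -{1}(linear0 T) (ST 0 I).
  have -> : y = P y by apply/eqP; rewrite -subr_eq0 -/q q0.
  exact: (proj_in HP).
- by move=> x _; apply: ST.
- by move=> x _; apply: TS.
Qed.

Lemma cnu_orthH1 N : closed_subspace ip N -> reduces N T Ts -> cnu_on ip r N T Ts ->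
  forall x h, N x -> H1 h -> ip x h = 0.
Proof.
move=> HN red [_ ncc] x h Nx Hh1.
have [P HP] := proj_exists Hh HN.
have cT : forall y, P (T y) = T (P y).
  apply: (proj_comm Hh HN HP Hadj) => [a b|y Ny|y Ny]; [exact: linearB | by case: (red _ Ny) | by case: (red _ Ny)].
have cTs : forall y, P (Ts y) = Ts (P y).
  have adj' : adjoint_of ip Ts T by move=> a b; exact: adjTs.
  apply: (proj_comm Hh HN HP adj') => [a b|y Ny|y Ny]; [exact: (linfB TsP) | by case: (red _ Ny) | by case: (red _ Ny)].
have lP : linf P by move=> a u v; exact: (projP Hh HN HP).
have HPh : H1 (P h) := comm_H1 lP cT cTs Hh1.
have Ph0 : P h = 0.
  apply: boolp.contrapT => nz; apply: ncc.
  exists (fun y => N y /\ H1 y); split.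
  - exact: closed_and HN H1_closed.
  - by move=> y [].
  - by exists (P h); split => //; split => //; exact: (proj_in HP).
  - move=> y [Ny H1y]; case: (red _ Ny) => a b; case: (H1_red H1y) => c d; by split.
  - apply: A_CC.
    + exact: closed_subsp (closed_and HN H1_closed).
    + move=> y [Ny H1y]; case: (red _ Ny) => a b; case: (H1_red H1y) => c d; by split.
    + by move=> y [_ hy]; exact: (hy [::]).
by rewrite -(proj_id Hh HN HP Nx) (proj_sa Hh HP) Ph0 ip0r.
Qed.

Lemma type_true M : closed_subspace ip M -> reduces M T Ts -> (forall x, M x -> H1 x) ->
  of_type ip r true M T Ts.
Proof.
move=> HM red sub; rewrite /of_type /=; split; first exact: C1r_M.
apply: A_CC.
- exact: closed_subsp HM.
- exact: red.
- by move=> x /sub h; exact: (h [::]).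
Qed.

Lemma type_false M : closed_subspace ip M -> reduces M T Ts -> (forall x, M x -> orth H1 x) ->
  of_type ip r false M T Ts.
Proof.
move=> HM red sub; rewrite /of_type /=; split; first exact: C1r_M.
move=> [N [HN sNM [x [Nx nx]] redN ccN]]; apply: nx.
have := H1_max (closed_subsp HN) redN ccN Nx.
by move/(sub _ (sNM _ Nx)); exact: ip_eq0.
Qed.

End Op.

Lemma ord_all_eq0 (j k : 'I_(2 ^ 0)) : j = k.
Proof.
case: j => a ha; case: k => b hb; apply/val_inj => /=.
by move: ha hb; rewrite expn0 !ltnS !leqn0 => /eqP -> /eqP ->.
Qed.

Lemma sigma_ex d : exists sigma : {ffun 'I_d -> bool} -> 'I_(2 ^ d),
  [/\ bijective sigma, sigma [ffun => true] = first_idx d & sigma [ffun => false] = last_idx d].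
Proof.
have Hc : #|{ffun 'I_d -> bool}| = (2 ^ d)%N by rewrite card_ffun card_bool card_ord.
pose e0 := fun w : {ffun 'I_d -> bool} => cast_ord Hc (enum_rank w).
have be0 : bijective e0.
  exists (fun j => enum_val (cast_ord (esym Hc) j)) => w; rewrite /e0.
    by rewrite cast_ordK enum_rankK.
  by rewrite enum_valK cast_ordKV.
case: d Hc e0 be0 => [|d] Hc e0 be0.
  by exists e0; split => //; apply: ord_all_eq0.
pose a := e0 [ffun => true]; pose b := e0 [ffun => false].
pose f := first_idx d.+1; pose l := last_idx d.+1.
pose b' := tperm a f b.
pose sigma := fun w => tperm b' l (tperm a f (e0 w)).
have fl : f != l.
  have h : (2 <= 2 ^ d.+1)%N by rewrite (leq_exp2l 1 d.+1).
  by rewrite -(inj_eq val_inj) /=; case: (2 ^ d.+1)%N h => [|[|m]].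
have ab : a != b.
  rewrite (inj_eq (bij_inj be0)); apply/eqP => /ffunP /(_ ord0); rewrite !ffunE.
  by [].
have b'f : b' != f.
  by rewrite /b' -{2}(tpermL a f) (inj_eq (@perm_inj _ _)) eq_sym.
exists sigma; split.
- apply: bij_comp; first exact: (injF_bij (@perm_inj _ _)).
  apply: bij_comp => //; exact: (injF_bij (@perm_inj _ _)).
- by rewrite /sigma -/a tpermL tpermD // eq_sym.
- by rewrite /sigma -/b -/b' tpermL.
Qed.

Unset Implicit Arguments.
Section Main.
Variables (R : realType) (V : lmodType R[i]) (ip : V -> V -> R[i]).
Hypothesis Hh : is_hilbert ip.
Variables (r : R) (d : nat) (T : 'I_d -> {linear V -> V}) (Ts : 'I_d -> V -> V).
Hypothesis Hr : 0 < r < 1.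
Hypothesis Hadj : forall i, adjoint_of ip (T i) (Ts i).
Hypothesis HT : forall i, in_C1r_on ip r (fun _ => True) (T i).
Hypothesis Hcomm : forall i j x, T i (T j x) = T j (T i x).
Hypothesis Hdc : forall i j x, i != j -> T i (Ts j x) = Ts j (T i x).
Local Notation orth := (orth ip).

Definition H1i i := H1 r (T i) (Ts i).
Definition K i (b : bool) : V -> Prop := if b then H1i i else orth (H1i i).
Definition piece (w : {ffun 'I_d -> bool}) : V -> Prop := fun x => forall i, K i (w i) x.

Lemma TsTs i j x : Ts i (Ts j x) = Ts j (Ts i x).
Proof.
apply: (ip_ext_r Hh) => z; by rewrite -!Hadj Hcomm.
Qed.

Lemma red_orth M i : reduces M (T i) (Ts i) -> reduces (orth M) (T i) (Ts i).
Proof.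
move=> red x ox; split => m Mm.
  by rewrite Hadj; apply: ox; case: (red _ Mm).
by rewrite (adjTs Hh (Hadj i)); apply: ox; case: (red _ Mm).
Qed.

Lemma H1i_red (i j : 'I_d) : reduces (H1i i) (T j) (Ts j).
Proof.
case: (eqVneq i j) => [<-|ij]; first exact: H1_red.
move=> x hx; split.
  apply: (comm_H1 (Q := T j)) => //; first exact: linf_lin.
    by move=> y; rewrite Hcomm.
  by move=> y; rewrite Hdc // eq_sym.
apply: (comm_H1 (Q := Ts j)) => //; first exact: (TsP Hh (Hadj j)).
  by move=> y; rewrite Hdc.
by move=> y; rewrite TsTs.
Qed.

Lemma K_closed (i : 'I_d) (b : bool) : closed_subspace ip (K i b).
Proof. case: b; [exact: (H1_closed Hh r (Hadj i)) | exact: orth_closed]. Qed.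

Lemma K_red (i : 'I_d) (b : bool) (j : 'I_d) : reduces (K i b) (T j) (Ts j).
Proof. case: b; [exact: H1i_red | apply: red_orth; exact: H1i_red]. Qed.

Lemma piece_closed (w : {ffun 'I_d -> bool}) : closed_subspace ip (piece w).
Proof. by apply: closed_all => i; exact: K_closed. Qed.

Lemma piece_red (w : {ffun 'I_d -> bool}) (j : 'I_d) : reduces (piece w) (T j) (Ts j).
Proof.
move=> x hx; split => i; by case: (K_red i (w i) j x (hx i)).
Qed.

Lemma piece_type (w : {ffun 'I_d -> bool}) (j : 'I_d) : of_type ip r (w j) (piece w) (T j) (Ts j).
Proof.
case hw: (w j).
  apply: (type_true Hh Hr (Hadj j) (HT j) (piece_closed w) (piece_red w j)).
  by move=> x /(_ j); rewrite /K hw.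
apply: (type_false Hh (Hadj j) (HT j) (piece_closed w) (piece_red w j)).
by move=> x /(_ j); rewrite /K hw.
Qed.

Lemma piece_orth (w w' : {ffun 'I_d -> bool}) x y : w != w' -> piece w x -> piece w' y -> ip x y = 0.
Proof.
move=> ne px py; have [i hi] : exists i, w i != w' i.
  apply: boolp.contrapT => hn; move/eqP: ne; apply; apply/ffunP => i.
  by apply/eqP; apply: boolp.contrapT => h; apply: hn; exists i; apply/negP.
move: (px i) (py i); rewrite /K; case: (w i) hi; case: (w' i) => // _ hx hy.
  by apply: (ip_sym0 Hh); apply: hy.
by apply: hx.
Qed.

Lemma projK_pres k (P : V -> V) : is_proj ip (H1i k) P -> forall i b x, i != k -> K i b x -> K i b (P x).
Proof.
move=> HP i b x ik.
have HM := H1_closed Hh r (Hadj k).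
have lP : linf P by move=> a u v; exact: (projP Hh HM HP).
have cT : forall y, P (T i y) = T i (P y).
  apply: (proj_comm Hh HM HP (Hadj i)) => [u v|y Hy|y Hy]; [exact: linearB | by case: (H1i_red k i y Hy) | by case: (H1i_red k i y Hy)].
have cTs : forall y, P (Ts i y) = Ts i (P y).
  have adj' : adjoint_of ip (Ts i) (T i) by move=> u v; exact: (adjTs Hh (Hadj i)).
  apply: (proj_comm Hh HM HP adj') => [u v|y Hy|y Hy]; [exact: (linfB (TsP Hh (Hadj i))) | by case: (H1i_red k i y Hy) | by case: (H1i_red k i y Hy)].
case: b => /= hx.
  exact: (comm_H1 lP cT cTs hx).
move=> h Hh1; rewrite (proj_sa Hh HP); apply: hx.
exact: (comm_H1 lP cT cTs Hh1).
Qed.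

Lemma decomp_seq (s : seq 'I_d) : uniq s -> forall x, exists g : {ffun 'I_d -> bool} -> V,
  [/\ x = \sum_w g w,
      forall (w : {ffun 'I_d -> bool}) i, i \in s -> K i (w i) (g w) &
      forall (w : {ffun 'I_d -> bool}) i, i \notin s -> ~~ w i -> g w = 0].
Proof.
elim: s => [|k s IH] /=.
  move=> _ x; exists (fun w => if w == [ffun => true] then x else 0); split.
  - by rewrite (bigD1 [ffun => true]) //= eqxx big1 ?addr0 // => w /negbTE ->.
  - by [].
  - move=> w i _ hwi; case: eqP => // ew; move: hwi; by rewrite ew ffunE.
case/andP => ks us x; have [g [gx gin g0]] := IH us x.
have HM := H1_closed Hh r (Hadj k).
have [P HP] := proj_exists Hh HM.
pose flip (w : {ffun 'I_d -> bool}) := [ffun j => if j == k then ~~ w j else w j].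
have flipK : involutive flip by move=> w; apply/ffunP => j; rewrite !ffunE; case: eqP => // _; exact: negbK.
have flipk : forall w : {ffun 'I_d -> bool}, flip w k = ~~ w k by move=> w; rewrite ffunE eqxx.
have flipi : forall (w : {ffun 'I_d -> bool}) i, i != k -> flip w i = w i by move=> w i ik; rewrite ffunE (negbTE ik).
exists (fun w : {ffun 'I_d -> bool} => if w k then P (g w) else g (flip w) - P (g (flip w))); split.
- rewrite (bigID (fun w : {ffun 'I_d -> bool} => w k)) /=.
  rewrite [X in _ + X](reindex_inj (inv_inj flipK)) /=.
  under [X in _ + X]eq_bigl => w do rewrite flipk negbK.
  under [X in _ + X]eq_bigr => w hw do rewrite flipK flipk hw /=.
  under eq_bigr => w hw do rewrite hw.
  rewrite -big_split /=.
  under eq_bigr => w _ do rewrite addrC subrK.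
  rewrite gx (bigID (fun w : {ffun 'I_d -> bool} => w k)) /= [X in _ + X]big1 ?addr0 //.
  by move=> w hw; apply: (g0 w k ks hw).
- move=> w i; rewrite in_cons; case: (eqVneq i k) => [->|ik] /= hi.
    rewrite /K; case: (w k).
      exact: (proj_in HP).
    exact: (proj_orth HP).
  have sK := closed_subsp (K_closed i (w i)).
  case: (w k).
    exact: (projK_pres k P HP i (w i) (g w) ik (gin w i hi)).
  have := gin (flip w) i hi; rewrite flipi // => hg.
  by apply: subspB => //; exact: (projK_pres k P HP i (w i) _ ik hg).
- move=> w i; rewrite in_cons negb_or => /andP[ik ni] hwi.
  case: (w k).
    by rewrite (g0 w i) // (proj0 Hh HM HP).
  by rewrite (g0 (flip w) i) ?flipi // (proj0 Hh HM HP) subr0.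
Qed.

Lemma decomp x : exists g : {ffun 'I_d -> bool} -> V, x = \sum_w g w /\ forall w, piece w (g w).
Proof.
have [g [gx gin _]] := decomp_seq _ (enum_uniq 'I_d) x.
by exists g; split => // w i; apply: gin; rewrite mem_enum.
Qed.

Lemma ip_sum (I : finType) (P : pred I) (F : I -> V) z :
  ip (\sum_(i | P i) F i) z = \sum_(i | P i) ip (F i) z.
Proof. by apply: (big_morph (fun v => ip v z)) => [u v|]; [exact: ipDl | exact: ip0l]. Qed.

Lemma piece_unique (Ks : {ffun 'I_d -> bool} -> V -> Prop) :
  orth_decomposition ip Ks ->
  (forall (w : {ffun 'I_d -> bool}) i, reduces (Ks w) (T i) (Ts i)) ->
  (forall (w : {ffun 'I_d -> bool}) j, of_type ip r (w j) (Ks w) (T j) (Ts j)) ->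
  forall (w : {ffun 'I_d -> bool}) x, Ks w x <-> piece w x.
Proof.
move=> [Kcl Kor Kdec] Kred Kty.
have sub : forall (w : {ffun 'I_d -> bool}) x, Ks w x -> piece w x.
  move=> w x kx i; have := Kty w i; rewrite /K /of_type; case: (w i).
    case=> _ cc; exact: (H1_max Hh (Hadj i) (closed_subsp (Kcl w)) (Kred w i) cc kx).
  move=> cnu h h1; exact: (cnu_orthH1 Hh Hr (Hadj i) (Kcl w) (Kred w i) cnu kx h1).
move=> w x; split; first exact: sub.
move=> px; have [f [hf xf]] := Kdec x.
have sP := closed_subsp (piece_closed w).
have ey : x - f w = \sum_(w' | w' != w) f w'.
  by rewrite xf (bigD1 w) //= addrAC subrr add0r.
have py : piece w (x - f w) := subspB sP px (sub w _ (hf w)).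
have y0 : x - f w = 0.
  apply: (ip_eq0 Hh); rewrite {1}ey ip_sum big1 // => w' nw.
  exact: (piece_orth _ _ _ _ nw (sub _ _ (hf w')) py).
by move/eqP: y0; rewrite subr_eq0 => /eqP ->.
Qed.

End Main.

Theorem theorem3p7 (R : realType) (V : lmodType R[i]) (ip : V -> V -> R[i])
    (r : R) (d : nat) (T : 'I_d -> {linear V -> V}) (Ts : 'I_d -> V -> V) :
  is_hilbert ip ->
  0 < r < 1 ->
  (forall i, adjoint_of ip (T i) (Ts i)) ->
  (forall i, in_C1r_on ip r (fun _ => True) (T i)) ->
  (forall i j x, T i (T j x) = T j (T i x)) ->
  (forall i j x, i != j -> T i (Ts j x) = Ts j (T i x)) ->
  exists (Hs : 'I_(2 ^ d) -> V -> Prop) (sigma : {ffun 'I_d -> bool} -> 'I_(2 ^ d)),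
    [/\ orth_decomposition ip Hs,
        [/\
        (* (1) joint reducing subspaces *)
        (forall j i, reduces (Hs j) (T i) (Ts i)),
        (* (2) each restriction is of type t1 or t2 *)
        (forall i j, of_type ip r true (Hs j) (T i) (Ts i) \/
                     of_type ip r false (Hs j) (T i) (Ts i)) &
        (* (3) the subspaces are labelled bijectively by Omega_d *)
        bijective sigma /\
        (forall (w : {ffun 'I_d -> bool}) (j : 'I_d),
            of_type ip r (w j) (Hs (sigma w)) (T j) (Ts j))],
        (* (4) H_1 is the maximal joint reducing subspace with all restrictions
               in \mathcal C_{1,r} *)
        ((forall i, in_CC1r_on ip r (Hs (first_idx d)) (T i)) /\
         forall N : V -> Prop, closed_subspace ip N ->
           (forall i, reduces N (T i) (Ts i)) ->
           (forall i, in_CC1r_on ip r N (T i)) ->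
           subset_of N (Hs (first_idx d))),
        (* (5) H_{2^d} is the maximal joint reducing subspace with all
               restrictions c.n.u. C_{1,r}-contractions *)
        ((forall i, cnu_on ip r (Hs (last_idx d)) (T i) (Ts i)) /\
         forall N : V -> Prop, closed_subspace ip N ->
           (forall i, reduces N (T i) (Ts i)) ->
           (forall i, cnu_on ip r N (T i) (Ts i)) ->
           subset_of N (Hs (last_idx d))) &
        (* uniqueness of the decomposition (indexed by Omega_d) *)
        (forall Ks : {ffun 'I_d -> bool} -> V -> Prop,
           orth_decomposition ip Ks ->
           (forall (w : {ffun 'I_d -> bool}) (i : 'I_d), reduces (Ks w) (T i) (Ts i)) ->
           (forall (w : {ffun 'I_d -> bool}) (j : 'I_d), of_type ip r (w j) (Ks w) (T j) (Ts j)) ->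
           forall (w : {ffun 'I_d -> bool}) (x : V), Ks w x <-> Hs (sigma w) x)].
Proof.
move=> Hh Hr Hadj HT Hcomm Hdc.
pose pc := piece _ _ ip r d T Ts.
have pcl : forall w, closed_subspace ip (pc w) by move=> w; apply: piece_closed.
have prd : forall w j, reduces (pc w) (T j) (Ts j) by move=> w j; apply: piece_red.
have pty : forall (w : {ffun 'I_d -> bool}) j, of_type ip r (w j) (pc w) (T j) (Ts j).
  by move=> w j; apply: piece_type.
have por : forall w w' x y, w != w' -> pc w x -> pc w' y -> ip x y = 0.
  by move=> w w' x y; apply: piece_orth.
have pdec : forall x, exists g : {ffun 'I_d -> bool} -> V, x = \sum_w g w /\ forall w, pc w (g w).
  by move=> x; apply: decomp.
have [sigma [bs sT sF]] := sigma_ex d.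
case: (bs) => sinv sK sKinv.
exists (fun j => pc (sinv j)), sigma; split.
- split.
  + by move=> j; apply: pcl.
  + move=> j k x y jk hx hy; apply: (por _ _ x y _ hx hy).
    by apply: contra jk => /eqP h; rewrite -(sKinv j) h sKinv.
  + move=> x; have [g [gx gp]] := pdec x.
    exists (fun j => g (sinv j)); split; first by move=> j; apply: gp.
    rewrite gx (reindex sigma) /=; last by apply: onW_bij.
    by apply: eq_bigr => w _; rewrite sK.
- split.
  + by move=> j i; apply: prd.
  + move=> i j; have := pty (sinv j) i; case: (sinv j i) => h; [left | right]; exact: h.
  + split => // w j; rewrite sK; exact: pty.
- have e1 : sinv (first_idx d) = [ffun => true] by rewrite -sT sK.
  rewrite e1; split.
  + by move=> i; have := pty [ffun => true] i; rewrite ffunE; case.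
  + move=> N HN redN ccN x Nx i; rewrite /K ffunE /=.
    exact: (H1_max Hh (Hadj i) (closed_subsp HN) (redN i) (ccN i) Nx).
- have e2 : sinv (last_idx d) = [ffun => false] by rewrite -sF sK.
  rewrite e2; split.
  + by move=> i; have := pty [ffun => false] i; rewrite ffunE.
  + move=> N HN redN cnuN x Nx i; rewrite /K ffunE /= => h h1.
    exact: (cnu_orthH1 Hh Hr (Hadj i) HN (redN i) (cnuN i) Nx h1).
- move=> Ks Kd Kr Kt w x; rewrite sK; apply: (piece_unique _ _ _ Hh r d T Ts) => //.
Qed.
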